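(* Let $f:\mathbb{R}\to(0,\infty)$ be $C^4$, unimodal with maximum at $0$, of the form $f=e^{-H}$ with $H$ regularly varying (there is $\alpha>0$ with $H(tx)/H(t)\to x^\alpha$ as $|t|\to\infty$ for all $x>0$), and with $|(\log f)''''|<M$ for some $M>0$. Suppose there exists $\gamma>0$ such that $|\mathrm{Var}_{g_\beta}(Y^2)-2|=\mathcal{O}(\beta^{-\gamma})$ as $\beta\to\infty$, where $g_\beta(y)\propto f^\beta\big(y/\sqrt{-\beta h''(0)}\big)$ is a probability density. Then, as $\beta\to\infty$, $$\frac{1}{4\beta}R(\beta)=\mathcal{O}(\beta^{-k}),$$ where in general $k=5/2$, but if $h'''(0)=0$ then $k=3$.
   Context: $h=\log f$, $k(x)=xh'(x)$, $r(x)=x^2h''(x)$; $\mathbb{E}_\beta$ denotes expectation under $f^\beta/\int f^\beta$; $R(\beta)=\mathbb{E}_\beta[r(X)-k(X)]$. *)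

(* Defs.v *)
From Stdlib Require Import Reals.
From Coquelicot Require Import Coquelicot.
Open Scope R_scope.

Definition C4 (f : R -> R) : Prop :=
  (forall (n : nat) (x : R), (n <= 4)%nat -> ex_derive_n f n x) /\
  (forall x : R, continuous (Derive_n f 4) x).

Definition unimodal_at0 (f : R -> R) : Prop :=
  (forall x y : R, x <= y <= 0 -> f x <= f y) /\
  (forall x y : R, 0 <= x <= y -> f y <= f x).

Definition regularly_varying (H : R -> R) (alpha : R) : Prop :=
  forall x : R, 0 < x ->
    is_lim (fun t => H (t * x) / H t) p_infty (Rpower x alpha) /\
    is_lim (fun t => H (t * x) / H t) m_infty (Rpower x alpha).

Definition int_R (g : R -> R) : R :=
  RInt_gen g (Rbar_locally m_infty) (Rbar_locally p_infty).

Definition Ebeta (f : R -> R) (beta : R) (phi : R -> R) : R :=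
  int_R (fun x => phi x * Rpower (f x) beta) / int_R (fun x => Rpower (f x) beta).

Definition hlog (f : R -> R) : R -> R := fun x => ln (f x).

(* R(beta) = E_beta[r(X) - k(X)],  k(x) = x h'(x), r(x) = x^2 h''(x) *)
Definition Rfun (f : R -> R) (beta : R) : R :=
  Ebeta f beta (fun x => x ^ 2 * Derive_n (hlog f) 2 x - x * Derive_n (hlog f) 1 x).

Definition gscale (f : R -> R) (beta : R) : R :=
  sqrt (- beta * Derive_n (hlog f) 2 0).

Definition Eg (f : R -> R) (beta : R) (phi : R -> R) : R :=
  int_R (fun y => phi y * Rpower (f (y / gscale f beta)) beta) /
  int_R (fun y => Rpower (f (y / gscale f beta)) beta).

Definition VarY2 (f : R -> R) (beta : R) : R :=
  Eg f beta (fun y => y ^ 4) - (Eg f beta (fun y => y ^ 2)) ^ 2.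

Definition bigO_infty (u v : R -> R) : Prop :=
  exists C beta0 : R, forall beta : R, beta0 <= beta -> Rabs (u beta) <= C * Rabs (v beta).

(* Main.v *)
Require Import Defs.
From Stdlib Require Import Reals Lra Lia.
From Coquelicot Require Import Coquelicot.
Open Scope R_scope.

Fixpoint Cn (n : nat) (u : R -> R) : Prop :=
  match n with O => True | S m => (forall x, ex_derive u x) /\ Cn m (Derive u) end.

Lemma Cn_ext n : forall u v, (forall x, u x = v x) -> Cn n u -> Cn n v.
Proof.
  induction n as [|n IH]; simpl; auto.
  intros u v E [D C]. split.
  - intros x. apply (ex_derive_ext u); auto.
  - apply (IH (Derive u)); auto. intros x. apply Derive_ext; auto.
Qed.

Lemma Cn_weak n : forall u, Cn (S n) u -> Cn n u.
Proof.
  induction n as [|n IH]; simpl; auto.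
  intros u [D C]. split; auto.
Qed.

Lemma Cn_const n : forall c, Cn n (fun _ => c).
Proof.
  induction n as [|n IH]; simpl; auto. intros c. split.
  - intros x. apply ex_derive_const.
  - apply (Cn_ext n (fun _ => 0)); auto. intros x. rewrite Derive_const. auto.
Qed.

Lemma Cn_plus n : forall u v, Cn n u -> Cn n v -> Cn n (fun x => u x + v x).
Proof.
  induction n as [|n IH]; simpl; auto.
  intros u v [Du Cu] [Dv Cv]. split.
  - intros x. apply (ex_derive_plus u v); auto.
  - apply (Cn_ext n (fun x => Derive u x + Derive v x)).
    + intros x. rewrite Derive_plus; auto.
    + apply IH; auto.
Qed.

Lemma Cn_mult n : forall u v, Cn n u -> Cn n v -> Cn n (fun x => u x * v x).
Proof.
  induction n as [|n IH]; simpl; auto.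
  intros u v [Du Cu] [Dv Cv]. split.
  - intros x. apply (ex_derive_mult u v); auto.
  - apply (Cn_ext n (fun x => Derive u x * v x + u x * Derive v x)).
    + intros x. rewrite Derive_mult; auto.
    + apply Cn_plus; apply IH; auto.
      * apply Cn_weak. simpl. split; auto.
      * apply Cn_weak. simpl. split; auto.
Qed.

Lemma Cn_inv n : forall u, (forall x, u x <> 0) -> Cn n u -> Cn n (fun x => / u x).
Proof.
  induction n as [|n IH]; simpl; auto.
  intros u Hu [Du Cu]. split.
  - intros x. apply (ex_derive_inv u); auto.
  - apply (Cn_ext n (fun x => ((fun _ => -1) x * Derive u x) * ((/ u x) * (/ u x)))).
    + intros x. rewrite Derive_inv; auto. simpl. field. auto.
    + apply Cn_mult; [apply Cn_mult|apply Cn_mult]; auto using Cn_const.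
      * apply IH; auto. apply Cn_weak. simpl. split; auto.
      * apply IH; auto. apply Cn_weak. simpl. split; auto.
Qed.

Lemma Cn_ln n : forall u, (forall x, 0 < u x) -> Cn (S n) u -> Cn (S n) (fun x => ln (u x)).
Proof.
  intros u Hu [Du Cu]. split.
  - intros x. eapply ex_derive_comp; auto. eexists. apply is_derive_ln; auto.
  - apply (Cn_ext n (fun x => Derive u x * / u x)).
    + intros x. symmetry. apply is_derive_unique.
      pose proof (is_derive_comp ln u x (/ u x) (Derive u x) (is_derive_ln _ (Hu x)) (Derive_correct _ _ (Du x))) as H.
      exact H.
    + apply Cn_mult; auto. apply Cn_inv. intros x; specialize (Hu x); lra.
      apply Cn_weak. simpl. split; auto.
Qed.

Lemma Cn_of n : forall u, (forall k x, (k <= n)%nat -> ex_derive_n u k x) -> Cn n u.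
Proof.
  induction n as [|n IH]; simpl; auto.
  intros u H. split.
  - intros x. apply (H 1%nat x). lia.
  - apply IH. intros k x Hk. destruct k as [|k]; simpl; auto.
    apply (ex_derive_ext (fun t => Derive_n u (S k) t)).
    + intros t. replace (S k) with (k+1)%nat by lia. rewrite <- (Derive_n_comp u k 1). reflexivity.
    + apply (H (S (S k)) x). lia.
Qed.

Lemma Cn_to n : forall u k x, Cn n u -> (k < n)%nat ->
  is_derive (Derive_n u k) x (Derive_n u (S k) x).
Proof.
  induction n as [|n IH]; intros u k x C Hk; [lia|].
  destruct C as [D C]. destruct k as [|k].
  - simpl. apply Derive_correct. apply D.
  - assert (E : forall j t, Derive_n u (S j) t = Derive_n (Derive u) j t).
    { intros j t. replace (S j) with (j+1)%nat by lia. rewrite <- (Derive_n_comp u j 1). reflexivity. }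
    rewrite E. apply (is_derive_ext (Derive_n (Derive u) k)).
    + intros t. rewrite E. reflexivity.
    + apply IH; auto. lia.
Qed.

Lemma exRI (g : R -> R) a b : (forall x, continuous g x) -> ex_RInt g a b.
Proof. intros C. apply (ex_RInt_continuous (V:=R_CompleteNormedModule)). intros; auto. Qed.

Lemma RInt_mono3 (g : R -> R) a0 b0 a b : (forall x, 0 <= g x) -> (forall x, continuous g x) ->
  a <= a0 -> a0 <= b0 -> b0 <= b -> RInt g a0 b0 <= RInt g a b.
Proof.
  intros P C H1 H2 H3.
  rewrite <- (RInt_Chasles g a a0 b) by (apply exRI; auto).
  rewrite <- (RInt_Chasles g a0 b0 b) by (apply exRI; auto).
  assert (0 <= RInt g a a0) by (apply RInt_ge_0; auto; apply exRI; auto).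
  assert (0 <= RInt g b0 b) by (apply RInt_ge_0; auto; apply exRI; auto).
  change plus with Rplus. lra.
Qed.

Lemma gen_sup (g : R -> R) (B : R) : (forall x, 0 <= g x) -> (forall x, continuous g x) ->
  (forall a b, a <= b -> RInt g a b <= B) ->
  exists L, is_RInt_gen g (Rbar_locally m_infty) (Rbar_locally p_infty) L /\
    int_R g = L /\ L <= B /\ (forall a b, a <= b -> RInt g a b <= L).
Proof.
  intros P C HB.
  set (E := fun y => exists a b, a <= b /\ y = RInt g a b).
  destruct (completeness E) as [L [HL1 HL2]].
  { exists B. intros y [a [b [Hab ->]]]. auto. }
  { exists (RInt g 0 0). exists 0, 0. split; auto; lra. }
  assert (Hub : forall a b, a <= b -> RInt g a b <= L).
  { intros a b Hab. apply HL1. exists a, b. auto. }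
  assert (HG : is_RInt_gen g (Rbar_locally m_infty) (Rbar_locally p_infty) L).
  { intros Pp [eps Heps].
    assert (Hex : exists a0 b0, a0 <= b0 /\ L - eps < RInt g a0 b0).
    { apply Classical_Pred_Type.not_all_not_ex. intros Hn.
      assert (L <= L - eps).
      { apply HL2. intros y [a [b [Hab ->]]].
        apply Rnot_lt_le. intros Hc. apply (Hn a). exists b. split; auto. }
      destruct eps; simpl in *; lra. }
    destruct Hex as [a0 [b0 [Hab0 Hlt]]].
    exists (fun a => a < a0) (fun b => b0 < b).
    - exists a0. auto.
    - exists b0. auto.
    - intros a b Ha Hb. exists (RInt g a b). split.
      + exact (RInt_correct (V:=R_CompleteNormedModule) g a b (exRI g a b C)).
      + apply Heps. simpl.
        assert (RInt g a0 b0 <= RInt g a b) by (apply RInt_mono3; auto; lra).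
        assert (RInt g a b <= L) by (apply Hub; lra).
        change (Rabs (RInt g a b - L) < eps). apply Rabs_def1; lra. }
  exists L. split; [auto|]. split.
  - unfold int_R. apply is_RInt_gen_unique. auto.
  - split; auto. apply HL2. intros y [a [b [Hab ->]]]. auto.
Qed.
Lemma cont_plus (u v : R -> R) x : continuous u x -> continuous v x -> continuous (fun t => u t + v t) x.
Proof. intros; apply (continuous_plus u v); auto. Qed.
Lemma cont_mult (u v : R -> R) x : continuous u x -> continuous v x -> continuous (fun t => u t * v t) x.
Proof. intros; apply (continuous_mult u v); auto. Qed.

Lemma gen_signed (g G : R -> R) (B : R) : (forall x, continuous g x) -> (forall x, continuous G x) ->
  (forall x, Rabs (g x) <= G x) -> (forall a b, a <= b -> RInt G a b <= B) ->
  Rabs (int_R g) <= 2 * B.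
Proof.
  intros Cg CG Hd HB.
  assert (HG0 : forall x, 0 <= G x) by (intros x; specialize (Hd x); pose proof (Rabs_pos (g x)); lra).
  destruct (gen_sup G B HG0 CG HB) as [L2 [I2 [_ [H2 H2']]]].
  destruct (gen_sup (fun x => G x + g x) (2 * B)) as [L1 [I1 [_ [H1 H1']]]].
  - intros x. specialize (Hd x). apply Rabs_le_between in Hd. lra.
  - intros x. apply cont_plus; auto.
  - intros a b Hab. apply Rle_trans with (RInt (fun x => G x + G x) a b).
    + apply RInt_le; auto; try (apply exRI; intros; apply cont_plus; auto).
      intros x _. specialize (Hd x). apply Rabs_le_between in Hd. lra.
    + pose proof (RInt_plus (V:=R_CompleteNormedModule) G G a b (exRI G a b CG) (exRI G a b CG)) as E.
      change plus with Rplus in E. rewrite E. specialize (HB a b Hab). lra.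
  - assert (Hm := is_RInt_gen_minus _ _ _ _ I1 I2).
    assert (Hm' : is_RInt_gen g (Rbar_locally m_infty) (Rbar_locally p_infty) (L1 - L2)).
    { eapply is_RInt_gen_ext; [|exact Hm].
      exists (fun _ => True) (fun _ => True); try (exists 0; auto).
      intros a b _ _ x _. unfold minus, plus, opp; simpl. ring. }
    unfold int_R. rewrite (is_RInt_gen_unique _ _ Hm').
    assert (0 <= L1) by (specialize (H1' 0 0 (Rle_refl 0)); rewrite RInt_point in H1'; exact H1').
    assert (0 <= L2) by (specialize (H2' 0 0 (Rle_refl 0)); rewrite RInt_point in H2'; exact H2').
    apply Rabs_le. lra.
Qed.
Lemma exd_cont (u : R -> R) x : ex_derive u x -> continuous u x.
Proof. intros H. exact (ex_derive_continuous (K:=R_AbsRing) (V:=R_NormedModule) u x H). Qed.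

Lemma int_lor (G : R -> R) (A beta : R) : 0 < beta -> 0 <= A -> (forall x, continuous G x) ->
  (forall x, G x <= A / (1 + beta * x ^ 2)) ->
  forall a b, a <= b -> RInt G a b <= A * PI / sqrt beta.
Proof.
  intros Hb HA CG HG a b Hab.
  set (s := sqrt beta).
  assert (Hs : 0 < s) by (apply sqrt_lt_R0; auto).
  assert (Hs2 : s * s = beta) by (apply sqrt_sqrt; lra).
  set (F := fun x => A * atan (s * x) / s).
  assert (Hpos : forall x, 0 < 1 + beta * x ^ 2).
  { intros x. pose proof (pow2_ge_0 x). nra. }
  assert (HD : forall x, is_derive F x (A / (1 + beta * x ^ 2))).
  { intros x. unfold F. rewrite <- Hs2. auto_derive; auto.
    specialize (Hpos x). rewrite <- Hs2 in Hpos. field. split; lra. }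
  assert (Cl : forall x, continuous (fun x => A / (1 + beta * x ^ 2)) x).
  { intros x. apply exd_cont. auto_derive. specialize (Hpos x). lra. }
  apply Rle_trans with (RInt (fun x => A / (1 + beta * x ^ 2)) a b).
  - apply RInt_le; auto; try (apply exRI; auto). intros; auto.
  - rewrite (is_RInt_unique _ _ _ _ (is_RInt_derive F _ a b (fun x _ => HD x) (fun x _ => Cl x))).
    unfold F, minus, plus, opp; simpl.
    pose proof (atan_bound (s * a)). pose proof (atan_bound (s * b)).
    unfold Rdiv. fold s.
    apply Rmult_le_reg_r with s; auto.
    field_simplify; try lra. nra.
Qed.
Lemma exp_mono x y : x <= y -> exp x <= exp y.
Proof. intros [H|H]. left; apply exp_increasing; auto. subst; lra. Qed.

Lemma isd_cont (g : R -> R) t l : is_derive g t l -> continuity_pt g t.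
Proof. intros H. apply continuity_pt_filterlim. apply exd_cont. exists l; auto. Qed.

Lemma MVT0 (g dg : R -> R) x : (forall t, is_derive g t (dg t)) ->
  exists c, Rabs c <= Rabs x /\ 0 <= c * x /\ g x - g 0 = dg c * x.
Proof.
  intros Hd.
  destruct (MVT_gen g 0 x dg) as [c [Hc E]].
  - intros; auto.
  - intros t _. apply isd_cont with (dg t); auto.
  - exists c. rewrite Rminus_0_r in E. split; [|split; auto].
    + unfold Rmin, Rmax in Hc. destruct (Rle_dec 0 x).
      * rewrite !Rabs_right; lra.
      * rewrite !Rabs_left1; lra.
    + unfold Rmin, Rmax in Hc. destruct (Rle_dec 0 x); nra.
Qed.

Lemma lip0 (g dg : R -> R) x B : (forall t, is_derive g t (dg t)) ->
  (forall t, Rabs t <= Rabs x -> Rabs (dg t) <= B) -> Rabs (g x - g 0) <= B * Rabs x.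
Proof.
  intros Hd HB. destruct (MVT0 g dg x Hd) as [c [Hc [_ E]]].
  rewrite E, Rabs_mult. apply Rmult_le_compat_r. apply Rabs_pos. auto.
Qed.

Lemma Dh (h : R -> R) k t : Cn 4 h -> (k < 4)%nat -> is_derive (Derive_n h k) t (Derive_n h (S k) t).
Proof. intros C Hk. apply Cn_to with 4%nat; auto. Qed.

Lemma b3 (h : R -> R) M x : Cn 4 h -> (forall y, Rabs (Derive_n h 4 y) < M) ->
  forall t, Rabs t <= Rabs x -> Rabs (Derive_n h 3 t) <= Rabs (Derive_n h 3 0) + M * Rabs x.
Proof.
  intros C HM t Ht.
  assert (H := lip0 (Derive_n h 3) (Derive_n h 4) t M (fun s => Dh h 3 s C ltac:(lia))
     (fun s _ => Rlt_le _ _ (HM s))).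
  pose proof (Rabs_triang_inv (Derive_n h 3 t) (Derive_n h 3 0)).
  assert (0 <= M) by (specialize (HM 0); pose proof (Rabs_pos (Derive_n h 4 0)); lra).
  assert (M * Rabs t <= M * Rabs x) by (apply Rmult_le_compat_l; auto). lra.
Qed.

Lemma b2 (h : R -> R) M x : Cn 4 h -> (forall y, Rabs (Derive_n h 4 y) < M) ->
  forall t, Rabs t <= Rabs x -> Rabs (Derive_n h 2 t - Derive_n h 2 0) <= (Rabs (Derive_n h 3 0) + M * Rabs x) * Rabs x.
Proof.
  intros C HM t Ht.
  assert (H := lip0 (Derive_n h 2) (Derive_n h 3) t (Rabs (Derive_n h 3 0) + M * Rabs x) (fun s => Dh h 2 s C ltac:(lia))
     (fun s Hs => b3 h M x C HM s (Rle_trans _ _ _ Hs Ht))).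
  assert (0 <= M) by (specialize (HM 0); pose proof (Rabs_pos (Derive_n h 4 0)); lra).
  assert (0 <= Rabs (Derive_n h 3 0) + M * Rabs x) by (pose proof (Rabs_pos (Derive_n h 3 0)); pose proof (Rabs_pos x); nra).
  eapply Rle_trans; [exact H|]. apply Rmult_le_compat_l; auto.
Qed.

Lemma phi_bound (h : R -> R) M x : Cn 4 h -> (forall y, Rabs (Derive_n h 4 y) < M) -> Derive_n h 1 0 = 0 ->
  Rabs (x ^ 2 * Derive_n h 2 x - x * Derive_n h 1 x) <=
  2 * (Rabs (Derive_n h 3 0) * Rabs x ^ 3 + M * x ^ 4).
Proof.
  intros C HM H10.
  set (c3 := Rabs (Derive_n h 3 0)). set (ax := Rabs x).
  set (d20 := Derive_n h 2 0).
  assert (Hg : forall t, is_derive (fun t => Derive_n h 1 t - d20 * t) t (Derive_n h 2 t - d20)).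
  { intros t. apply (is_derive_minus (Derive_n h 1) (fun t => d20 * t)).
    apply Dh; auto; lia. auto_derive; auto; ring. }
  assert (H1 := lip0 _ _ x ((c3 + M * ax) * ax) Hg (fun t Ht => b2 h M x C HM t Ht)).
  assert (H2 := b2 h M x C HM x (Rle_refl _)). fold c3 ax d20 in H1, H2.
  cbv beta in H1. rewrite H10 in H1. replace (Derive_n h 1 x - d20 * x - (0 - d20 * 0)) with (Derive_n h 1 x - d20 * x) in H1 by ring.
  replace (x ^ 2 * Derive_n h 2 x - x * Derive_n h 1 x) with
     (x ^ 2 * (Derive_n h 2 x - d20) - x * (Derive_n h 1 x - d20 * x)) by ring.
  assert (0 <= M) by (specialize (HM 0); pose proof (Rabs_pos (Derive_n h 4 0)); lra).
  assert (0 <= c3) by apply Rabs_pos. assert (0 <= ax) by apply Rabs_pos.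
  assert (Ex2 : x ^ 2 = ax ^ 2) by (unfold ax; rewrite pow2_abs; auto).
  assert (Ex4 : x ^ 4 = ax ^ 4) by (replace 4%nat with (2*2)%nat by lia; rewrite !pow_mult, Ex2; auto).
  eapply Rle_trans; [apply Rabs_triang|]. rewrite Rabs_Ropp, !Rabs_mult.
  rewrite <- RPow_abs. fold ax. rewrite Ex4.
  set (u := Rabs (Derive_n h 2 x - d20)) in *. set (v := Rabs (Derive_n h 1 x - d20 * x)) in *.
  assert (ax ^ 2 * u <= ax ^ 2 * ((c3 + M * ax) * ax)) by (apply Rmult_le_compat_l; auto; apply pow_le; auto).
  assert (ax * v <= ax * ((c3 + M * ax) * ax * ax)) by (apply Rmult_le_compat_l; auto).
  nra.
Qed.

Lemma h1zero (h : R -> R) l : (forall x, h x <= h 0) -> is_derive h 0 l -> l = 0.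
Proof.
  intros Hm Hd. apply is_derive_Reals in Hd.
  pose proof (deriv_maximum h (-1) 1 0 (exist _ l Hd) ltac:(lra) ltac:(lra) (fun x _ _ => Hm x)) as E.
  exact E.
Qed.

Lemma near0 (h : R -> R) M : Cn 4 h -> (forall y, Rabs (Derive_n h 4 y) < M) -> Derive_n h 1 0 = 0 ->
  Derive_n h 2 0 < 0 ->
  exists delta a C, 0 < delta /\ 0 < a /\ 0 < C /\ forall x, Rabs x <= delta ->
    - C * x ^ 2 <= h x - h 0 <= - a * x ^ 2.
Proof.
  intros Ch HM H10 H20.
  set (A := - Derive_n h 2 0).
  set (c3 := Rabs (Derive_n h 3 0)).
  assert (0 <= M) by (specialize (HM 0); pose proof (Rabs_pos (Derive_n h 4 0)); lra).
  assert (0 < M) by (specialize (HM 0); pose proof (Rabs_pos (Derive_n h 4 0)); lra).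
  assert (0 <= c3) by apply Rabs_pos.
  set (delta := Rmin 1 (A / (2 * (c3 + M)))).
  assert (Hd1 : delta <= 1) by apply Rmin_l.
  assert (Hd2 : delta <= A / (2 * (c3 + M))) by apply Rmin_r.
  assert (Hdp : 0 < delta) by (apply Rmin_glb_lt; [lra| unfold A; apply Rdiv_lt_0_compat; lra]).
  assert (Hh2 : forall t, Rabs t <= delta -> - 3 * A / 2 <= Derive_n h 2 t <= - A / 2).
  { intros t Ht. pose proof (b2 h M t Ch HM t (Rle_refl _)) as B. fold c3 in B.
    assert (Rabs t <= 1) by lra. pose proof (Rabs_pos t).
    assert ((c3 + M * Rabs t) * Rabs t <= (c3 + M) * delta).
    { apply Rmult_le_compat; nra. }
    assert ((c3 + M) * delta <= A / 2).
    { apply Rle_trans with ((c3 + M) * (A / (2 * (c3 + M)))). apply Rmult_le_compat_l; lra.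
      right. field. lra. }
    apply Rabs_le_between in B. unfold A in *. lra. }
  assert (D0 : forall t, is_derive h t (Derive_n h 1 t)) by (intros t; exact (Dh h 0 t Ch ltac:(lia))).
  assert (D1 : forall t, is_derive (Derive_n h 1) t (Derive_n h 2 t)) by (intros t; exact (Dh h 1 t Ch ltac:(lia))).
  assert (Hd1x : forall xi, Rabs xi <= delta -> exists eta, Rabs eta <= Rabs xi /\ Derive_n h 1 xi = Derive_n h 2 eta * xi).
  { intros xi Hxi. destruct (MVT0 _ _ xi D1) as [eta [He [_ E]]]. exists eta. split; auto. rewrite H10 in E. lra. }
  exists delta, (A / 4), (3 * A / 2). split; auto. split; [unfold A; lra|]. split; [unfold A; lra|].
  intros x Hx.
  assert (Ex2 : x ^ 2 = Rabs x * Rabs x) by (rewrite <- Rabs_mult; simpl; rewrite Rmult_1_r; rewrite Rabs_right; [auto|apply Rle_ge; nra]).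
  split.
  - destruct (MVT0 _ _ x D0) as [xi [Hxi [Hxi2 E]]].
    destruct (Hd1x xi ltac:(lra)) as [eta [Heta E2]].
    specialize (Hh2 eta ltac:(lra)).
    assert (xi * x <= Rabs x * Rabs x).
    { apply Rle_trans with (Rabs (xi * x)). apply Rle_abs. rewrite Rabs_mult.
      apply Rmult_le_compat_r; auto. apply Rabs_pos. }
    rewrite E, E2. rewrite Ex2. nra.
  - assert (Dg : forall t, is_derive (fun t => h t + A / 4 * t ^ 2) t (Derive_n h 1 t + A / 2 * t)).
    { intros t. eapply is_derive_ext; [|apply (is_derive_plus h (fun t => A / 4 * t ^ 2))].
      intros; reflexivity. apply D0. auto_derive; auto. field. }
    destruct (MVT0 _ _ x Dg) as [xi [Hxi [Hxi2 E]]].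
    destruct (Hd1x xi ltac:(lra)) as [eta [Heta E2]].
    specialize (Hh2 eta ltac:(lra)).
    rewrite E2 in E.
    assert ((Derive_n h 2 eta + A / 2) * (xi * x) <= 0) by nra.
    assert (E' : h x - h 0 + A / 4 * x ^ 2 = (Derive_n h 2 eta + A / 2) * (xi * x)).
    { cbv beta in E. rewrite <- (Rmult_assoc _ xi x), Rmult_plus_distr_r. rewrite <- E. simpl. ring. }
    unfold A in *. lra.
Qed.
Lemma tail1 (G : R -> R) (l : R) : 1 < l -> (forall x y, 0 <= x <= y -> G x <= G y) ->
  (exists T0, forall t, T0 < t -> Rabs (G (t * 2) / G t - l) < (l - 1) / 2) ->
  exists T d, 1 <= T /\ 0 < d /\ 0 < G T /\ forall t, T <= t -> G t + d <= G (t * 2).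
Proof.
  intros Hl Hm [T0 HT0].
  set (T := Rmax (T0 + 1) 1). set (r := (1 + l) / 2).
  assert (HT1 : 1 <= T) by apply Rmax_r. assert (HT2 : T0 + 1 <= T) by apply Rmax_l.
  assert (key : forall t, T <= t -> 0 < G t /\ r * G t < G (t * 2)).
  { intros t Ht. specialize (HT0 t ltac:(lra)). apply Rabs_lt_between in HT0.
    assert (Hmt : G t <= G (t * 2)) by (apply Hm; lra).
    destruct (Rtotal_order (G t) 0) as [Hn|[Hz|Hp]].
    - exfalso. assert (E : G (t * 2) = (G (t * 2) / G t) * G t) by (field; lra).
      set (q := G (t * 2) / G t) in *. unfold r in *. nra.
    - exfalso. unfold Rdiv in HT0. rewrite Hz, Rinv_0 in HT0. lra.
    - split; auto. assert (E : G (t * 2) = (G (t * 2) / G t) * G t) by (field; lra).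
      set (q := G (t * 2) / G t) in *. unfold r in *. nra. }
  destruct (key T (Rle_refl _)) as [HGT _].
  exists T, ((r - 1) * G T). split; auto. split. unfold r; nra. split; auto.
  intros t Ht. destruct (key t Ht) as [H1 H2].
  assert (G T <= G t) by (apply Hm; lra). unfold r in *. nra.
Qed.

Lemma tail2 (G : R -> R) T d b0 : 1 <= T -> 0 < d -> 0 < G T -> (forall x y, 0 <= x <= y -> G x <= G y) ->
  (forall t, T <= t -> G t + d <= G (t * 2)) -> 64 <= b0 * d -> 0 <= b0 ->
  forall x, T <= x -> x ^ 6 * exp (- b0 * G x) <= (2 * T) ^ 6.
Proof.
  intros HT Hd HGT Hm Hs Hb Hb0.
  assert (base : forall x, T <= x <= 2 * T -> x ^ 6 * exp (- b0 * G x) <= (2 * T) ^ 6).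
  { intros x Hx. assert (G T <= G x) by (apply Hm; lra).
    assert (exp (- b0 * G x) <= 1) by (rewrite <- exp_0; apply exp_mono; nra).
    assert (x ^ 6 <= (2 * T) ^ 6) by (apply pow_incr; lra).
    assert (0 < exp (- b0 * G x)) by apply exp_pos.
    assert (0 <= x ^ 6) by (apply pow_le; lra). nra. }
  assert (E64 : exp (- b0 * d) <= / 64).
  { assert (65 <= exp (b0 * d)).
    { apply Rle_trans with (exp 64). pose proof (exp_ineq1_le 64); lra. apply exp_mono; lra. }
    replace (- b0 * d) with (- (b0 * d)) by ring. rewrite exp_Ropp.
    apply Rinv_le_contravar; lra. }
  assert (ind : forall n x, T <= x <= INR (S n) * T -> x ^ 6 * exp (- b0 * G x) <= (2 * T) ^ 6).
  { induction n as [|n IH]; intros x Hx.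
    - apply base. simpl in Hx. lra.
    - destruct (Rle_dec x (2 * T)) as [Hle|Hgt]. apply base; lra.
      set (y := x / 2).
      assert (Hy1 : T <= y) by (unfold y; lra).
      assert (Hn : 1 <= INR (S n)) by (rewrite S_INR; pose proof (pos_INR n); lra).
      assert (Hy2 : y <= INR (S n) * T).
      { unfold y. rewrite S_INR with (n := S n) in Hx. nra. }
      specialize (IH y (conj Hy1 Hy2)).
      assert (Ex : x = y * 2) by (unfold y; field).
      assert (HG := Hs y Hy1). rewrite <- Ex in HG.
      assert (exp (- b0 * G x) <= exp (- b0 * G y) * exp (- b0 * d)).
      { rewrite <- exp_plus. apply exp_mono. nra. }
      assert (x ^ 6 = 64 * y ^ 6) by (rewrite Ex; ring).
      assert (0 <= y ^ 6) by (apply pow_le; lra).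
      assert (0 < exp (- b0 * G y)) by apply exp_pos.
      assert (0 < exp (- b0 * d)) by apply exp_pos.
      assert (y ^ 6 * exp (- b0 * G y) * exp (- b0 * d) <= y ^ 6 * exp (- b0 * G y) * / 64)
        by (apply Rmult_le_compat_l; nra).
      nra. }
  intros x Hx. destruct (INR_unbounded (x / T)) as [n Hn].
  apply (ind n). split; auto. rewrite S_INR.
  assert (x / T * T = x) by (field; lra). nra.
Qed.
Lemma tail_h (h : R -> R) l : 1 < l ->
  (forall x, h x <= h 0) ->
  (forall x y, 0 <= x <= y -> h y <= h x) ->
  (forall x y, x <= y <= 0 -> h x <= h y) ->
  is_lim (fun t => - h (t * 2) / - h t) p_infty l ->
  is_lim (fun t => - h (t * 2) / - h t) m_infty l ->
  exists b0 Kt, 0 < b0 /\ forall x, (1 + x ^ 2) ^ 3 * exp (b0 * h x) <= Kt.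
Proof.
  intros Hl Hmax Hm1 Hm2 Lp Lm.
  apply is_lim_spec in Lp. apply is_lim_spec in Lm.
  assert (eps : 0 < (l - 1) / 2) by lra.
  destruct (Lp (mkposreal _ eps)) as [Mp HMp]. destruct (Lm (mkposreal _ eps)) as [Mm HMm].
  simpl in HMp, HMm.
  destruct (tail1 (fun t => - h t) l Hl) as [T1 [d1 [HT1 [Hd1 [HG1 Hs1]]]]].
  { intros x y Hxy. specialize (Hm1 x y Hxy). lra. }
  { exists Mp. intros t Ht. apply HMp; auto. }
  destruct (tail1 (fun t => - h (- t)) l Hl) as [T2 [d2 [HT2 [Hd2 [HG2 Hs2]]]]].
  { intros x y Hxy. specialize (Hm2 (- y) (- x) ltac:(lra)). lra. }
  { exists (- Mm). intros t Ht. specialize (HMm (- t) ltac:(lra)).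
    replace (- (t * 2)) with (- t * 2) by ring. exact HMm. }
  set (b0 := 64 / d1 + 64 / d2).
  assert (Hb1 : 64 <= b0 * d1).
  { unfold b0. rewrite Rmult_plus_distr_r. assert (0 <= 64 / d2 * d1) by (apply Rmult_le_pos; [apply Rlt_le, Rdiv_lt_0_compat|]; lra).
    replace (64 / d1 * d1) with 64 by (field; lra). lra. }
  assert (Hb2 : 64 <= b0 * d2).
  { unfold b0. rewrite Rmult_plus_distr_r. assert (0 <= 64 / d1 * d2) by (apply Rmult_le_pos; [apply Rlt_le, Rdiv_lt_0_compat|]; lra).
    replace (64 / d2 * d2) with 64 by (field; lra). lra. }
  assert (Hb0 : 0 < b0) by (unfold b0; assert (0 < 64 / d1) by (apply Rdiv_lt_0_compat; lra); assert (0 < 64 / d2) by (apply Rdiv_lt_0_compat; lra); lra).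
  pose proof (tail2 (fun t => - h t) T1 d1 b0 HT1 Hd1 HG1 ltac:(intros x y Hxy; specialize (Hm1 x y Hxy); lra) Hs1 Hb1 ltac:(lra)) as P1.
  pose proof (tail2 (fun t => - h (- t)) T2 d2 b0 HT2 Hd2 HG2 ltac:(intros x y Hxy; specialize (Hm2 (- y) (- x) ltac:(lra)); lra) Hs2 Hb2 ltac:(lra)) as P2.
  simpl in P1, P2.
  set (T := Rmax T1 T2).
  assert (T1 <= T) by apply Rmax_l. assert (T2 <= T) by apply Rmax_r.
  exists b0, ((1 + T ^ 2) ^ 3 * exp (b0 * h 0) + 8 * (2 * T1) ^ 6 + 8 * (2 * T2) ^ 6).
  split; auto. intros x.
  assert (0 <= 8 * (2 * T1) ^ 6) by (apply Rmult_le_pos; [lra|apply pow_le; lra]).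
  assert (0 <= 8 * (2 * T2) ^ 6) by (apply Rmult_le_pos; [lra|apply pow_le; lra]).
  assert (0 <= (1 + T ^ 2) ^ 3 * exp (b0 * h 0)) by (apply Rmult_le_pos; [apply pow_le; nra|apply Rlt_le, exp_pos]).
  assert (0 < exp (b0 * h x)) by apply exp_pos.
  destruct (Rle_dec x T1) as [Hx1|Hx1]; [destruct (Rle_dec (- T2) x) as [Hx2|Hx2]|].
  - assert (x ^ 2 <= T ^ 2).
    { rewrite <- (pow2_abs x). apply pow_incr. split. apply Rabs_pos. apply Rabs_le; lra. }
    assert ((1 + x ^ 2) ^ 3 <= (1 + T ^ 2) ^ 3) by (apply pow_incr; nra).
    assert (exp (b0 * h x) <= exp (b0 * h 0)) by (apply exp_mono; apply Rmult_le_compat_l; [lra|auto]).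
    assert ((1 + x ^ 2) ^ 3 * exp (b0 * h x) <= (1 + T ^ 2) ^ 3 * exp (b0 * h 0)).
    { apply Rmult_le_compat; auto. apply pow_le; nra. lra. }
    lra.
  - specialize (P2 (- x) ltac:(lra)). rewrite Ropp_involutive in P2.
    replace (- b0 * - h x) with (b0 * h x) in P2 by ring.
    assert ((1 + x ^ 2) ^ 3 <= 8 * (- x) ^ 6).
    { replace ((- x) ^ 6) with ((x ^ 2) ^ 3) by ring. replace 8 with (2 ^ 3) by ring.
      rewrite <- Rpow_mult_distr. apply pow_incr. nra. }
    assert ((1 + x ^ 2) ^ 3 * exp (b0 * h x) <= 8 * ((- x) ^ 6 * exp (b0 * h x))).
    { rewrite <- Rmult_assoc. apply Rmult_le_compat_r; lra. }
    lra.
  - specialize (P1 x ltac:(lra)).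
    replace (- b0 * - h x) with (b0 * h x) in P1 by ring.
    assert ((1 + x ^ 2) ^ 3 <= 8 * x ^ 6).
    { replace (x ^ 6) with ((x ^ 2) ^ 3) by ring. replace 8 with (2 ^ 3) by ring.
      rewrite <- Rpow_mult_distr. apply pow_incr. nra. }
    assert ((1 + x ^ 2) ^ 3 * exp (b0 * h x) <= 8 * (x ^ 6 * exp (b0 * h x))).
    { rewrite <- Rmult_assoc. apply Rmult_le_compat_r; lra. }
    lra.
Qed.
Lemma cube_exp y c : 0 <= y -> 0 < c -> (1 + y) ^ 3 <= (1 + 3 / c) ^ 3 * exp (c * y).
Proof.
  intros Hy Hc.
  assert (E : exp (c * y) = exp (c * y / 3) ^ 3).
  { simpl. rewrite Rmult_1_r, <- !exp_plus. f_equal. field. }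
  rewrite E, <- Rpow_mult_distr. apply pow_incr. split. lra.
  pose proof (exp_ineq1_le (c * y / 3)).
  apply Rle_trans with ((1 + 3 / c) * (1 + c * y / 3)).
  - assert (3 / c * (c * y / 3) = y) by (field; lra).
    assert (0 <= 3 / c) by (apply Rlt_le, Rdiv_lt_0_compat; lra).
    assert (0 <= c * y / 3) by (apply Rmult_le_pos; [apply Rmult_le_pos|]; lra). nra.
  - apply Rmult_le_compat_l. assert (0 <= 3 / c) by (apply Rlt_le, Rdiv_lt_0_compat; lra). lra. auto.
Qed.

Lemma keyQ (h : R -> R) delta a b0 Kt : 0 < delta -> 0 < a -> 0 < b0 ->
  (forall x, Rabs x <= delta -> h x - h 0 <= - a * x ^ 2) ->
  (forall x, delta <= Rabs x -> h x - h 0 <= - a * delta ^ 2) ->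
  (forall x, (1 + x ^ 2) ^ 3 * exp (b0 * h x) <= Kt) ->
  exists K b1, 1 <= b1 /\ 0 < K /\ forall beta x, b1 <= beta ->
    (1 + beta * x ^ 2) ^ 3 * exp (beta * (h x - h 0)) <= K.
Proof.
  intros Hd Ha Hb0 Hnear Hfar Ht.
  set (s := a * delta ^ 2).
  assert (Hs : 0 < s) by (unfold s; apply Rmult_lt_0_compat; auto; apply pow_lt; auto).
  assert (HKt : 0 <= Kt).
  { eapply Rle_trans; [|apply (Ht 0)]. apply Rmult_le_pos. apply pow_le. nra. apply Rlt_le, exp_pos. }
  set (K1 := (1 + 3 / a) ^ 3). set (K2 := Kt * exp (b0 * (s - h 0)) * (1 + 3 / s) ^ 3).
  assert (HK1 : 0 < K1) by (unfold K1; apply pow_lt; assert (0 < 3 / a) by (apply Rdiv_lt_0_compat; lra); lra).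
  assert (HK2 : 0 <= K2).
  { unfold K2. apply Rmult_le_pos. apply Rmult_le_pos; auto. apply Rlt_le, exp_pos.
    apply pow_le. assert (0 < 3 / s) by (apply Rdiv_lt_0_compat; lra); lra. }
  exists (K1 + K2), (Rmax 1 b0). split. apply Rmax_l. split. lra.
  intros beta x Hbeta.
  assert (Hb1 : 1 <= beta) by (eapply Rle_trans; [apply Rmax_l|exact Hbeta]).
  assert (Hbb : b0 <= beta) by (eapply Rle_trans; [apply Rmax_r|exact Hbeta]).
  assert (Hx2 : 0 <= x ^ 2) by apply pow2_ge_0.
  assert (0 < exp (beta * (h x - h 0))) by apply exp_pos.
  destruct (Rle_dec (Rabs x) delta) as [Hn|Hf].
  - assert (exp (beta * (h x - h 0)) <= exp (- (a * (beta * x ^ 2)))).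
    { apply exp_mono. specialize (Hnear x Hn). nra. }
    pose proof (cube_exp (beta * x ^ 2) a ltac:(nra) Ha) as C.
    assert ((1 + beta * x ^ 2) ^ 3 * exp (beta * (h x - h 0)) <= K1).
    { apply Rle_trans with ((1 + beta * x ^ 2) ^ 3 * exp (- (a * (beta * x ^ 2)))).
      apply Rmult_le_compat_l; auto. apply pow_le; nra.
      apply Rle_trans with (K1 * exp (a * (beta * x ^ 2)) * exp (- (a * (beta * x ^ 2)))).
      apply Rmult_le_compat_r; auto. apply Rlt_le, exp_pos.
      rewrite Rmult_assoc, <- exp_plus, Rplus_opp_r, exp_0. lra. }
    lra.
  - specialize (Hfar x ltac:(lra)).
    assert (Hfs : h x - h 0 <= - s) by (unfold s; lra). clear Hfar. rename Hfs into Hfar.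
    assert (E1 : exp (beta * (h x - h 0)) <= exp (b0 * h x) * exp (b0 * (s - h 0)) * exp (- (s * beta))).
    { rewrite <- !exp_plus. apply exp_mono.
      replace (beta * (h x - h 0)) with (b0 * (h x - h 0) + (beta - b0) * (h x - h 0)) by ring.
      assert ((beta - b0) * (h x - h 0) <= (beta - b0) * (- s)) by (apply Rmult_le_compat_l; lra).
      assert (E : b0 * h x + b0 * (s - h 0) + - (s * beta) = b0 * (h x - h 0) + (beta - b0) * (- s)) by ring.
      rewrite E. lra. }
    assert (E2 : (1 + beta * x ^ 2) ^ 3 <= beta ^ 3 * (1 + x ^ 2) ^ 3).
    { rewrite <- Rpow_mult_distr. apply pow_incr. nra. }
    pose proof (cube_exp beta s ltac:(lra) Hs) as C.
    assert (E3 : beta ^ 3 * exp (- (s * beta)) <= (1 + 3 / s) ^ 3).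
    { assert (beta ^ 3 <= (1 + beta) ^ 3) by (apply pow_incr; lra).
      apply Rle_trans with ((1 + 3 / s) ^ 3 * exp (s * beta) * exp (- (s * beta))).
      apply Rmult_le_compat_r. apply Rlt_le, exp_pos. lra.
      rewrite Rmult_assoc, <- exp_plus, Rplus_opp_r, exp_0. lra. }
    specialize (Ht x).
    assert (P1 : 0 <= (1 + x ^ 2) ^ 3) by (apply pow_le; nra).
    assert (P2 : 0 <= beta ^ 3) by (apply pow_le; lra).
    assert (P3 : 0 < exp (b0 * h x)) by apply exp_pos.
    assert (P4 : 0 < exp (b0 * (s - h 0))) by apply exp_pos.
    assert (P5 : 0 < exp (- (s * beta))) by apply exp_pos.
    apply Rle_trans with (beta ^ 3 * (1 + x ^ 2) ^ 3 * (exp (b0 * h x) * exp (b0 * (s - h 0)) * exp (- (s * beta)))).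
    { apply Rmult_le_compat; auto. apply pow_le; nra. lra. }
    replace (beta ^ 3 * (1 + x ^ 2) ^ 3 * (exp (b0 * h x) * exp (b0 * (s - h 0)) * exp (- (s * beta))))
      with (((1 + x ^ 2) ^ 3 * exp (b0 * h x)) * exp (b0 * (s - h 0)) * (beta ^ 3 * exp (- (s * beta)))) by ring.
    unfold K2.
    assert (((1 + x ^ 2) ^ 3 * exp (b0 * h x)) * exp (b0 * (s - h 0)) * (beta ^ 3 * exp (- (s * beta)))
       <= Kt * exp (b0 * (s - h 0)) * (1 + 3 / s) ^ 3).
    { apply Rmult_le_compat. apply Rmult_le_pos; [apply Rmult_le_pos|]; lra. apply Rmult_le_pos; lra.
      apply Rmult_le_compat_r; lra. auto. }
    lra.
Qed.
Lemma ptw P y e K : 0 <= P -> P <= (1 + y) ^ 2 -> 0 <= y -> 0 < e -> (1 + y) ^ 3 * e <= K ->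
  P * (1 + y) * e <= K.
Proof.
  intros H1 H2 H3 H4 H5. apply Rle_trans with ((1 + y) ^ 3 * e); auto.
  replace ((1 + y) ^ 3) with ((1 + y) ^ 2 * (1 + y)) by ring.
  apply Rmult_le_compat_r; [lra|]. apply Rmult_le_compat_r; lra.
Qed.

Lemma w3 w : 0 <= w -> w ^ 3 <= (1 + w ^ 2) ^ 2.
Proof. intros Hw. destruct (Rle_dec w 1); nra. Qed.

Lemma main_est (f : R -> R) (M : R) (A : R -> R) (c3 : R)
  (f_pos : forall x, 0 < f x)
  (Ch : Cn 4 (hlog f))
  (HM : forall y, Rabs (Derive_n (hlog f) 4 y) < M)
  (H10 : Derive_n (hlog f) 1 0 = 0)
  (Hc3 : c3 = Rabs (Derive_n (hlog f) 3 0))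
  delta C K b1
  (Hd : 0 < delta) (HC : 0 < C) (HK : 0 < K) (Hb1 : 1 <= b1)
  (Hlow : forall x, Rabs x <= delta -> - C * x ^ 2 <= hlog f x - hlog f 0)
  (HQ : forall beta x, b1 <= beta -> (1 + beta * x ^ 2) ^ 3 * exp (beta * (hlog f x - hlog f 0)) <= K)
  (HA : forall beta, Rmax b1 (/ delta ^ 2) <= beta -> 0 < A beta /\ A beta <= beta ^ 2 /\
         (c3 = 0 \/ A beta <= beta * sqrt beta)) :
  forall beta, Rmax b1 (/ delta ^ 2) <= beta ->
    Rabs (Rfun f beta / (4 * beta)) <= ((c3 + M) * K * PI * exp C / 2) * / (beta * A beta).
Proof.
  intros beta Hbeta.
  set (h := hlog f) in *.
  assert (Hb1' : b1 <= beta) by (eapply Rle_trans; [apply Rmax_l|exact Hbeta]).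
  assert (Hbd : / delta ^ 2 <= beta) by (eapply Rle_trans; [apply Rmax_r|exact Hbeta]).
  assert (Hb : 1 <= beta) by lra.
  destruct (HA beta Hbeta) as [HA0 [HA1 HA2]].
  assert (HM0 : 0 < M) by (specialize (HM 0); pose proof (Rabs_pos (Derive_n h 4 0)); lra).
  assert (Hc30 : 0 <= c3) by (rewrite Hc3; apply Rabs_pos).
  set (E0 := exp (beta * h 0)).
  assert (HE0 : 0 < E0) by apply exp_pos.
  assert (FE : forall x, Rpower (f x) beta = E0 * exp (beta * (h x - h 0))).
  { intros x. unfold Rpower, E0, h, hlog. rewrite <- exp_plus. f_equal. ring. }
  set (phi := fun x => x ^ 2 * Derive_n h 2 x - x * Derive_n h 1 x).
  assert (Dh1 : forall k x, (k < 4)%nat -> ex_derive (Derive_n h k) x).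
  { intros k x Hk. exists (Derive_n h (S k) x). apply Dh; auto. }
  assert (contF : forall x, continuous (fun x => Rpower (f x) beta) x).
  { intros x. apply exd_cont. unfold Rpower. 
    apply (ex_derive_ext (fun x => exp (beta * h x))); [intros; reflexivity|].
    auto_derive. exact (Dh1 0%nat x ltac:(lia)). }
  assert (contP : forall x, continuous (fun x => phi x * Rpower (f x) beta) x).
  { intros x. apply cont_mult; auto. apply exd_cont. unfold phi. auto_derive.
    split; [exact (Dh1 2%nat x ltac:(lia))|split; [exact (Dh1 1%nat x ltac:(lia))|auto]]. }
  set (sb := sqrt beta).
  assert (Hsb : 0 < sb) by (apply sqrt_lt_R0; lra).
  assert (Hsb2 : sb * sb = beta) by (apply sqrt_sqrt; lra).
  set (B := E0 * (2 * (c3 + M) * K) / A beta).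
  assert (HB : 0 <= B).
  { unfold B. apply Rmult_le_pos. apply Rmult_le_pos. lra. nra. apply Rlt_le, Rinv_0_lt_compat; auto. }
  assert (Hnum : Rabs (int_R (fun x => phi x * Rpower (f x) beta)) <= 2 * (B * PI / sb)).
  { apply (gen_signed _ (fun x => B / (1 + beta * x ^ 2))); auto.
    - intros x. apply exd_cont. auto_derive. pose proof (pow2_ge_0 x). nra.
    - intros x. rewrite Rabs_mult, FE. pose proof (HQ beta x Hb1') as HQx.
      set (e := exp (beta * (h x - h 0))) in *. assert (He : 0 < e) by apply exp_pos.
      set (y := beta * x ^ 2) in *. assert (Hy : 0 <= y) by (unfold y; pose proof (pow2_ge_0 x); nra).
      rewrite (Rabs_right (E0 * e)) by (apply Rle_ge, Rmult_le_pos; lra).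
      pose proof (phi_bound h M x Ch HM H10) as Pb. rewrite <- Hc3 in Pb. fold (phi x) in Pb.
      set (ax := Rabs x) in *. assert (Hax : 0 <= ax) by apply Rabs_pos.
      assert (Ex2 : x ^ 2 = ax ^ 2) by (unfold ax; rewrite pow2_abs; auto).
      assert (Ex4 : x ^ 4 = (ax ^ 2) ^ 2) by (rewrite <- Ex2; ring).
      assert (T4 : x ^ 4 * A beta * (1 + y) * e <= K).
      { apply ptw; auto. apply Rmult_le_pos; [rewrite Ex4; apply pow2_ge_0|lra].
        apply Rle_trans with (x ^ 4 * beta ^ 2). apply Rmult_le_compat_l; [rewrite Ex4; apply pow2_ge_0|exact HA1].
        unfold y. replace (x ^ 4 * beta ^ 2) with ((beta * x ^ 2) ^ 2) by ring. apply pow_incr. nra. }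
      assert (T3 : c3 * (ax ^ 3 * A beta * (1 + y) * e) <= c3 * K).
      { destruct HA2 as [Z|HA2]. rewrite Z; lra. apply Rmult_le_compat_l; auto. apply ptw; auto.
        apply Rmult_le_pos; [apply pow_le|]; lra.
        apply Rle_trans with (ax ^ 3 * (beta * sb)). apply Rmult_le_compat_l; auto. apply pow_le; lra.
        replace (ax ^ 3 * (beta * sb)) with ((ax * sb) ^ 3) by (rewrite <- Hsb2; ring).
        replace y with ((ax * sb) ^ 2) by (unfold y; rewrite Ex2, <- Hsb2; ring).
        apply w3. nra. }
      assert (Hfin : Rabs (phi x) * (E0 * e) * (1 + y) * A beta <= E0 * (2 * (c3 + M) * K)).
      { apply Rle_trans with (2 * (c3 * ax ^ 3 + M * x ^ 4) * (E0 * e) * (1 + y) * A beta).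
        repeat apply Rmult_le_compat_r; try lra. apply Rmult_le_pos; lra.
        replace (2 * (c3 * ax ^ 3 + M * x ^ 4) * (E0 * e) * (1 + y) * A beta) with
          (2 * E0 * (c3 * (ax ^ 3 * A beta * (1 + y) * e) + M * (x ^ 4 * A beta * (1 + y) * e))) by ring.
        assert (M * (x ^ 4 * A beta * (1 + y) * e) <= M * K) by (apply Rmult_le_compat_l; lra).
        nra. }
      unfold B. apply (Rmult_le_reg_r ((1 + y) * A beta)). nra.
      replace (E0 * (2 * (c3 + M) * K) / A beta / (1 + y) * ((1 + y) * A beta)) with (E0 * (2 * (c3 + M) * K)) by (field; lra).
      rewrite <- Rmult_assoc. exact Hfin.
    - intros a b Hab. apply int_lor; auto; try lra. 
      intros x. apply exd_cont. auto_derive. pose proof (pow2_ge_0 x). nra. intros; lra. }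
  destruct (gen_sup (fun x => Rpower (f x) beta) (E0 * K * PI / sb)) as [D [_ [HD [_ HDl]]]].
  { intros x. rewrite FE. apply Rmult_le_pos; [lra|apply Rlt_le, exp_pos]. }
  { auto. }
  { intros a b Hab. apply int_lor; auto; try lra. nra.
    intros x. rewrite FE. specialize (HQ beta x Hb1').
    set (e := exp (beta * (h x - h 0))) in *. assert (He : 0 < e) by apply exp_pos.
    set (y := beta * x ^ 2) in *. assert (Hy : 0 <= y) by (unfold y; pose proof (pow2_ge_0 x); nra).
    assert (1 * (1 + y) * e <= K) by (apply ptw; auto; nra).
    apply (Rmult_le_reg_r (1 + y)). lra.
    replace (E0 * K / (1 + y) * (1 + y)) with (E0 * K) by (field; lra).
    rewrite Rmult_assoc. apply Rmult_le_compat_l; lra. }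
  set (u := / sb).
  assert (Hu : 0 < u) by (apply Rinv_0_lt_compat; auto).
  assert (Husb : u * sb = 1) by (unfold u; field; lra).
  assert (Hud : u <= delta).
  { assert (1 <= (delta * sb) ^ 2).
    { replace ((delta * sb) ^ 2) with (delta ^ 2 * beta) by (rewrite <- Hsb2; ring).
      assert (0 < delta ^ 2) by (apply pow_lt; auto).
      apply (Rmult_le_compat_l (delta ^ 2)) in Hbd; [|lra]. rewrite Rinv_r in Hbd; lra. }
    assert (Hp : 0 < delta * sb) by (apply Rmult_lt_0_compat; lra).
    assert (H1 : 1 <= delta * sb).
    { destruct (Rle_dec 1 (delta * sb)) as [r|r]; auto. exfalso.
      assert ((delta * sb) ^ 2 < 1 ^ 2) by (apply pow_lt_1_compat || (simpl; nra)). simpl in *; lra. }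
    apply (Rmult_le_reg_r sb); auto. lra. }
  assert (HDlow : 2 * u * (E0 * exp (- C)) <= D).
  { apply Rle_trans with (RInt (fun x => Rpower (f x) beta) (- u) u); [|apply HDl; lra].
    apply Rle_trans with (RInt (fun _ => E0 * exp (- C)) (- u) u).
    { rewrite RInt_const. unfold scal; simpl. unfold mult; simpl. lra. }
    apply RInt_le; try lra. apply exRI. intros; apply continuous_const. apply exRI; auto.
    intros x Hx. rewrite FE. apply Rmult_le_compat_l; [lra|]. apply exp_mono.
    assert (Hxa : Rabs x <= u) by (apply Rabs_le; lra).
    specialize (Hlow x ltac:(lra)).
    assert (x ^ 2 <= u ^ 2) by (rewrite <- pow2_abs; apply pow_incr; split; [apply Rabs_pos|auto]).
    assert (beta * x ^ 2 <= 1).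
    { replace 1 with (beta * u ^ 2) by (rewrite <- Hsb2; replace (sb * sb * u ^ 2) with ((u * sb) ^ 2) by ring; rewrite Husb; ring).
      apply Rmult_le_compat_l; lra. }
    pose proof (pow2_ge_0 x). nra. }
  assert (HexpC : 0 < exp (- C)) by apply exp_pos.
  assert (HDp : 0 < D).
  { assert (0 < 2 * u * (E0 * exp (- C))) by (apply Rmult_lt_0_compat; [lra|apply Rmult_lt_0_compat; lra]). lra. }
  unfold Rfun, Ebeta.
  change (Rabs (int_R (fun x => phi x * Rpower (f x) beta) / int_R (fun x => Rpower (f x) beta) / (4 * beta))
    <= (c3 + M) * K * PI * exp C / 2 * / (beta * A beta)).
  rewrite HD. set (N := int_R (fun x => phi x * Rpower (f x) beta)) in *.
  set (X := B * PI / (E0 * exp (- C))).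
  assert (HX : Rabs N <= X * D).
  { apply Rle_trans with (2 * (B * PI / sb)); auto.
    apply Rle_trans with (X * (2 * u * (E0 * exp (- C)))).
    - right. unfold X, u. field. split; lra.
    - apply Rmult_le_compat_l; auto. unfold X. apply Rmult_le_pos. apply Rmult_le_pos; auto. pose proof PI_RGT_0; lra.
      apply Rlt_le, Rinv_0_lt_compat; nra. }
  unfold Rdiv. rewrite !Rabs_mult, (Rabs_right (/ D)), (Rabs_right (/ (4 * beta))).
  2: apply Rle_ge, Rlt_le, Rinv_0_lt_compat; lra.
  2: apply Rle_ge, Rlt_le, Rinv_0_lt_compat; lra.
  apply Rle_trans with (X * / (4 * beta)).
  - apply Rmult_le_compat_r. apply Rlt_le, Rinv_0_lt_compat; lra.
    apply (Rmult_le_reg_r D); auto. rewrite Rmult_assoc, Rinv_l; lra.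
  - right. unfold X, B. rewrite exp_Ropp. field. repeat split; try lra.
    pose proof (exp_pos C); lra.
Qed.

Lemma rp52 b : 0 < b -> Rpower b (- (5 / 2)) = / (b * (b * sqrt b)).
Proof.
  intros Hb. rewrite Rpower_Ropp. f_equal.
  replace (5 / 2) with (INR 2 + / 2) by (simpl; field).
  rewrite Rpower_plus, Rpower_pow, Rpower_sqrt; auto. simpl; ring.
Qed.

Lemma rp3 b : 0 < b -> Rpower b (- 3) = / (b * b ^ 2).
Proof.
  intros Hb. replace (- 3) with (- INR 3) by (simpl; ring).
  rewrite Rpower_Ropp, Rpower_pow; auto.
Qed.

Theorem lemma5 (f : R -> R) (alpha M : R)
  (f_pos : forall x : R, 0 < f x)
  (f_C4 : C4 f)
  (f_unimodal : unimodal_at0 f)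
  (alpha_pos : 0 < alpha)
  (H_regvar : regularly_varying (fun x => - ln (f x)) alpha)
  (M_pos : 0 < M)
  (h4_bound : forall x : R, Rabs (Derive_n (hlog f) 4 x) < M)
  (h2_neg : Derive_n (hlog f) 2 0 < 0)
  (var_hyp : exists gamma : R, 0 < gamma /\
     bigO_infty (fun beta => VarY2 f beta - 2) (fun beta => Rpower beta (- gamma))) :
  bigO_infty (fun beta => Rfun f beta / (4 * beta)) (fun beta => Rpower beta (- (5 / 2))) /\
  (Derive_n (hlog f) 3 0 = 0 ->
   bigO_infty (fun beta => Rfun f beta / (4 * beta)) (fun beta => Rpower beta (- 3))).
Proof.
  clear var_hyp.
  assert (Ch : Cn 4 (hlog f)).
  { unfold hlog. apply Cn_ln; auto. apply Cn_of. intros k x Hk. apply (proj1 f_C4); auto. }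
  destruct f_unimodal as [Um1 Um2].
  assert (hmax : forall x, hlog f x <= hlog f 0).
  { intros x. unfold hlog. apply ln_le; auto. destruct (Rle_dec x 0).
    apply Um1; lra. apply Um2; lra. }
  assert (hm1 : forall x y, 0 <= x <= y -> hlog f y <= hlog f x).
  { intros x y H. unfold hlog. apply ln_le; auto. }
  assert (hm2 : forall x y, x <= y <= 0 -> hlog f x <= hlog f y).
  { intros x y H. unfold hlog. apply ln_le; auto. }
  assert (H10 : Derive_n (hlog f) 1 0 = 0).
  { apply (h1zero (hlog f)); auto. exact (Dh (hlog f) 0 0 Ch ltac:(lia)). }
  destruct (near0 (hlog f) M Ch h4_bound H10 h2_neg) as [delta [a [C [Hd [Ha [HC Hn]]]]]].
  assert (Hfar : forall x, delta <= Rabs x -> hlog f x - hlog f 0 <= - a * delta ^ 2).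
  { intros x Hx. destruct (Rle_dec 0 x) as [Hx0|Hx0].
    - rewrite Rabs_right in Hx by lra.
      assert (hlog f x <= hlog f delta) by (apply hm1; lra).
      assert (Rabs delta <= delta) by (rewrite Rabs_right; lra).
      specialize (Hn delta ltac:(lra)). lra.
    - rewrite Rabs_left in Hx by lra.
      assert (hlog f x <= hlog f (- delta)) by (apply hm2; lra).
      assert (Rabs (- delta) <= delta) by (rewrite Rabs_Ropp, Rabs_right; lra).
      specialize (Hn (- delta) ltac:(lra)).
      replace ((- delta) ^ 2) with (delta ^ 2) in Hn by ring. lra. }
  assert (Hl : 1 < Rpower 2 alpha).
  { rewrite <- (Rpower_O 2) at 1 by lra. apply Rpower_lt; lra. }
  destruct (H_regvar 2 ltac:(lra)) as [Lp Lm].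
  destruct (tail_h (hlog f) (Rpower 2 alpha) Hl hmax hm1 hm2 Lp Lm) as [b0 [Kt [Hb0 HKt]]].
  destruct (keyQ (hlog f) delta a b0 Kt Hd Ha Hb0 (fun x Hx => proj2 (Hn x Hx)) Hfar HKt)
    as [K [b1 [Hb1 [HK HQ]]]].
  set (c3 := Rabs (Derive_n (hlog f) 3 0)).
  split.
  - exists ((c3 + M) * K * PI * exp C / 2), (Rmax b1 (/ delta ^ 2)).
    intros beta Hbeta.
    assert (Hb : 1 <= beta) by (eapply Rle_trans; [apply Hb1|eapply Rle_trans; [apply Rmax_l|exact Hbeta]]).
    rewrite rp52 by lra. rewrite (Rabs_right (/ (beta * (beta * sqrt beta)))).
    2: { apply Rle_ge, Rlt_le, Rinv_0_lt_compat. assert (0 < sqrt beta) by (apply sqrt_lt_R0; lra). apply Rmult_lt_0_compat; [lra|apply Rmult_lt_0_compat; lra]. }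
    apply (main_est f M (fun beta => beta * sqrt beta) c3 f_pos Ch h4_bound H10 eq_refl delta C K b1 Hd HC HK Hb1
       (fun x Hx => proj1 (Hn x Hx)) HQ); auto.
    intros b Hb'. assert (1 <= b) by (eapply Rle_trans; [apply Hb1|eapply Rle_trans; [apply Rmax_l|exact Hb']]).
    assert (Hs : 0 < sqrt b) by (apply sqrt_lt_R0; lra).
    assert (Hs2 : sqrt b * sqrt b = b) by (apply sqrt_sqrt; lra).
    split. nra. split. assert (1 <= sqrt b) by nra. nra. right; lra.
  - intros H3. exists ((c3 + M) * K * PI * exp C / 2), (Rmax b1 (/ delta ^ 2)).
    intros beta Hbeta.
    assert (Hb : 1 <= beta) by (eapply Rle_trans; [apply Hb1|eapply Rle_trans; [apply Rmax_l|exact Hbeta]]).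
    rewrite rp3 by lra. rewrite (Rabs_right (/ (beta * beta ^ 2))).
    2: { apply Rle_ge, Rlt_le, Rinv_0_lt_compat. apply Rmult_lt_0_compat; [lra|apply pow_lt; lra]. }
    apply (main_est f M (fun beta => beta ^ 2) c3 f_pos Ch h4_bound H10 eq_refl delta C K b1 Hd HC HK Hb1
       (fun x Hx => proj1 (Hn x Hx)) HQ); auto.
    intros b Hb'. assert (1 <= b) by (eapply Rle_trans; [apply Hb1|eapply Rle_trans; [apply Rmax_l|exact Hb']]).
    split. nra. split. lra. left. unfold c3. rewrite H3, Rabs_R0. auto.
Qed.
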